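(* Let $h$ be a positive function and $v$ a solution of $\ddot v=\frac{2}{h^2}(e^v-1)$. If $v$ has a minimum at $m$, then $v(m)\ge0$; if $v$ has a maximum at $M$, then $v(M)\le0$. Moreover, if $v$ satisfies the initial conditions $v(\delta)<0$, $\dot v(\delta)<0$ (resp. $v(\delta)>0$, $\dot v(\delta)>0$), then $v<0$ (resp. $v>0$) on $(\delta,\infty)$.
   Context: Here $v$ is a real function of $r$ (defined on $[\delta,\infty)$ for the second statement) and dots denote derivatives in $r$; minima and maxima are taken at interior points where $\dot v=0$. *)

(* Defs.v *)
From Stdlib Require Export Reals.
Open Scope R_scope.

Definition solves_on (P : R -> Prop) (h v dv : R -> R) : Prop :=
  forall r, P r ->
    derivable_pt_lim v r (dv r) /\
    derivable_pt_lim dv r (2 / (h r) ^ 2 * (exp (v r) - 1)).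

Definition is_local_min (f : R -> R) (m : R) : Prop :=
  exists eps, 0 < eps /\ forall x, Rabs (x - m) < eps -> f m <= f x.

Definition is_local_max (f : R -> R) (m : R) : Prop :=
  exists eps, 0 < eps /\ forall x, Rabs (x - m) < eps -> f x <= f m.

Definition right_cont (f : R -> R) (x0 : R) : Prop :=
  forall eps, 0 < eps -> exists d, 0 < d /\
    forall x, x0 < x < x0 + d -> Rabs (f x - f x0) < eps.

(* Main.v *)
Require Import Defs.
From Stdlib Require Import Reals Lra.
Open Scope R_scope.

Lemma D (f : R -> R) x l : derivable_pt_lim f x l -> l < 0 ->
  exists d, 0 < d /\ forall h, 0 < h < d -> f (x+h) < f x /\ f x < f (x-h).
Proof.
  intros H Hl. destruct (H (-l)) as [del Hd]; [lra|].
  exists del; split; [apply cond_pos|]. intros h Hh. split.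
  - assert (Q := Hd h ltac:(lra) ltac:(rewrite Rabs_pos_eq; lra)).
    set (q := (f(x+h)-f x)/h) in Q. assert (q<0) by (apply Rabs_def2 in Q; lra).
    assert (f(x+h)-f x = q*h) by (unfold q; field; lra). nra.
  - assert (Q := Hd (-h) ltac:(lra) ltac:(rewrite Rabs_Ropp, Rabs_pos_eq; lra)).
    set (q := (f(x+ -h)-f x)/ -h) in Q. assert (q<0) by (apply Rabs_def2 in Q; lra).
    assert (f(x+ -h)-f x = q*(-h)) by (unfold q; field; lra).
    replace (x - h) with (x + - h) by ring. nra.
Qed.

Lemma minlemma (v dv : R -> R) m e L : 0 < e ->
  (forall x, m-e<x<m+e -> derivable_pt_lim v x (dv x)) ->
  derivable_pt_lim dv m L -> L < 0 -> is_local_min v m -> False.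
Proof.
  intros He Hv HL HLn [eps [Heps Hmin]].
  assert (Hz : dv m = 0).
  { destruct (Rtotal_order (dv m) 0) as [Hn|[Hz|Hp]]; auto; exfalso.
    - destruct (D v m (dv m) (Hv m ltac:(lra)) Hn) as [d [Hd Hf]].
      set (h := Rmin d eps / 2).
      assert (0 < Rmin d eps) by (apply Rmin_pos; lra).
      pose proof (Rmin_l d eps); pose proof (Rmin_r d eps).
      destruct (Hf h ltac:(unfold h; lra)) as [K1 _].
      assert (H2 := Hmin (m+h) ltac:(replace (m+h-m) with h by ring; rewrite Rabs_pos_eq; unfold h; lra)).
      lra.
    - assert (Ho := derivable_pt_lim_opp _ _ _ (Hv m ltac:(lra))).
      destruct (D _ m _ Ho ltac:(lra)) as [d [Hd Hf]].
      set (h := Rmin d eps / 2).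
      assert (0 < Rmin d eps) by (apply Rmin_pos; lra).
      pose proof (Rmin_l d eps); pose proof (Rmin_r d eps).
      destruct (Hf h ltac:(unfold h; lra)) as [_ K1]. unfold opp_fct in K1.
      assert (H2 := Hmin (m-h) ltac:(replace (m-h-m) with (-h) by ring; rewrite Rabs_Ropp, Rabs_pos_eq; unfold h; lra)).
      lra. }
  destruct (D dv m L HL HLn) as [d [Hd Hf]].
  assert (0 < Rmin eps e) by (apply Rmin_pos; lra).
  assert (0 < Rmin d (Rmin eps e)) by (apply Rmin_pos; lra).
  pose proof (Rmin_l d (Rmin eps e)); pose proof (Rmin_r d (Rmin eps e)).
  pose proof (Rmin_l eps e); pose proof (Rmin_r eps e).
  set (h := Rmin d (Rmin eps e) / 2).
  destruct (MVT_cor2 v dv m (m+h)) as [c [Hc1 Hc2]].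
  { unfold h; lra. }
  { intros c Hc. apply Hv. unfold h in Hc; lra. }
  assert (Hdc : dv c < 0).
  { destruct (Hf (c-m) ltac:(unfold h in Hc2; lra)) as [K1 _].
    replace (m + (c-m)) with c in K1 by ring. lra. }
  assert (K2 := Hmin (m+h) ltac:(replace (m+h-m) with h by ring; rewrite Rabs_pos_eq; unfold h; lra)).
  assert (0 < h) by (unfold h; lra).
  replace (m+h-m) with h in Hc1 by ring. nra.
Qed.

Lemma G (w dw : R -> R) delta r :
  (forall x, delta < x -> derivable_pt_lim w x (dw x)) ->
  right_cont w delta -> right_cont dw delta -> w delta < 0 -> dw delta < 0 ->
  delta < r -> 0 <= w r ->
  exists m, delta < m < r /\ w m < 0 /\ is_local_min w m.
Proof.
  intros Hw Cw Cdw Hw0 Hdw0 Hr Hwr.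
  destruct (Cdw (- dw delta) ltac:(lra)) as [d1 [Hd1 H1]].
  destruct (Cw (- w delta) ltac:(lra)) as [d2 [Hd2 H2]].
  assert (0 < Rmin d1 d2) by (apply Rmin_pos; lra).
  assert (0 < Rmin (Rmin d1 d2) (r-delta)) by (apply Rmin_pos; lra).
  pose proof (Rmin_l d1 d2); pose proof (Rmin_r d1 d2).
  pose proof (Rmin_l (Rmin d1 d2) (r-delta)); pose proof (Rmin_r (Rmin d1 d2) (r-delta)).
  set (e := Rmin (Rmin d1 d2) (r-delta)) in *.
  set (t1 := delta + e/3). set (t2 := delta + 2*e/3).
  destruct (MVT_cor2 w dw t1 t2) as [c [Hc1 Hc2]].
  { unfold t1, t2; lra. }
  { intros c Hc. apply Hw. unfold t1 in Hc; lra. }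
  assert (dw c < 0).
  { assert (K := H1 c ltac:(unfold t1, t2 in Hc2; lra)). apply Rabs_def2 in K. lra. }
  assert (w t2 < 0).
  { assert (K := H2 t2 ltac:(unfold t2; lra)). apply Rabs_def2 in K. lra. }
  assert (w t2 < w t1) by (unfold t1, t2 in *; nra).
  destruct (continuity_ab_min w t1 r) as [Mx HM].
  { unfold t1; lra. }
  { intros c0 Hc0. apply derivable_continuous_pt. exists (dw c0). apply Hw.
    unfold t1 in Hc0; lra. }
  destruct HM as [HM [HM1 HM2]].
  assert (Hle := HM t2 ltac:(unfold t1, t2; lra)).
  assert (Mx <> t1) by (intro E; subst; lra).
  assert (Mx <> r) by (intro E; subst; lra).
  exists Mx. split; [unfold t1 in *; lra|]. split; [lra|].
  exists (Rmin (Mx - t1) (r - Mx)). split; [apply Rmin_pos; lra|].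
  intros x Hx. pose proof (Rmin_l (Mx - t1) (r - Mx)); pose proof (Rmin_r (Mx - t1) (r - Mx)).
  apply Rabs_def2 in Hx. apply (HM x). lra.
Qed.

Lemma coef_pos (h : R) : 0 < h -> 0 < 2 / h ^ 2.
Proof. intros. apply Rdiv_lt_0_compat; [lra| apply pow_lt; lra]. Qed.

Lemma exp_neg x : x < 0 -> exp x - 1 < 0.
Proof. intros. pose proof (exp_increasing x 0 H). rewrite exp_0 in H0. lra. Qed.
Lemma exp_pos' x : 0 < x -> 0 < exp x - 1.
Proof. intros. pose proof (exp_increasing 0 x H). rewrite exp_0 in H0. lra. Qed.

Theorem mainTheorem13 :
  (forall (a b : R) (h v dv : R -> R) (m : R),
      (forall r, a < r < b -> 0 < h r) ->
      solves_on (fun r => a < r < b) h v dv ->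
      a < m < b -> is_local_min v m -> 0 <= v m) /\
  (forall (a b : R) (h v dv : R -> R) (M : R),
      (forall r, a < r < b -> 0 < h r) ->
      solves_on (fun r => a < r < b) h v dv ->
      a < M < b -> is_local_max v M -> v M <= 0) /\
  (forall (delta : R) (h v dv : R -> R),
      (forall r, delta <= r -> 0 < h r) ->
      solves_on (fun r => delta < r) h v dv ->
      right_cont v delta -> right_cont dv delta ->
      v delta < 0 -> dv delta < 0 ->
      forall r, delta < r -> v r < 0) /\
  (forall (delta : R) (h v dv : R -> R),
      (forall r, delta <= r -> 0 < h r) ->
      solves_on (fun r => delta < r) h v dv ->
      right_cont v delta -> right_cont dv delta ->
      0 < v delta -> 0 < dv delta ->
      forall r, delta < r -> 0 < v r).
Proof.
  split; [|split; [|split]].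
  - intros a b h v dv m Hh Hs Hm Hmin.
    destruct (Rle_or_lt 0 (v m)) as [|Hn]; auto; exfalso.
    apply (minlemma v dv m (Rmin (m-a) (b-m)) (2 / (h m)^2 * (exp (v m) - 1))).
    + apply Rmin_pos; lra.
    + intros x Hx. pose proof (Rmin_l (m-a) (b-m)); pose proof (Rmin_r (m-a) (b-m)).
      apply (Hs x). lra.
    + apply (Hs m Hm).
    + pose proof (coef_pos _ (Hh m Hm)). pose proof (exp_neg _ Hn). nra.
    + exact Hmin.
  - intros a b h v dv m Hh Hs Hm [eps [He Hmax]].
    destruct (Rle_or_lt (v m) 0) as [|Hn]; auto; exfalso.
    apply (minlemma (fun x => - v x) (fun x => - dv x) m (Rmin (m-a) (b-m))
             (- (2 / (h m)^2 * (exp (v m) - 1)))).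
    + apply Rmin_pos; lra.
    + intros x Hx. pose proof (Rmin_l (m-a) (b-m)); pose proof (Rmin_r (m-a) (b-m)).
      exact (derivable_pt_lim_opp _ _ _ (proj1 (Hs x ltac:(lra)))).
    + exact (derivable_pt_lim_opp _ _ _ (proj2 (Hs m Hm))).
    + pose proof (coef_pos _ (Hh m Hm)). pose proof (exp_pos' _ Hn). nra.
    + exists eps. split; auto. intros x Hx. specialize (Hmax x Hx). lra.
  - intros delta h v dv Hh Hs Cv Cdv Hv0 Hdv0 r Hr.
    destruct (Rlt_or_le (v r) 0) as [|Hn]; auto; exfalso.
    destruct (G v dv delta r) as [m [Hm [Hvm Hmin]]]; auto.
    { intros x Hx. apply (Hs x Hx). }
    apply (minlemma v dv m (m - delta) (2 / (h m)^2 * (exp (v m) - 1))).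
    + lra.
    + intros x Hx. apply (Hs x). lra.
    + apply (Hs m). lra.
    + pose proof (coef_pos _ (Hh m ltac:(lra))). pose proof (exp_neg _ Hvm). nra.
    + exact Hmin.
  - intros delta h v dv Hh Hs Cv Cdv Hv0 Hdv0 r Hr.
    destruct (Rlt_or_le 0 (v r)) as [|Hn]; auto; exfalso.
    destruct (G (fun x => - v x) (fun x => - dv x) delta r) as [m [Hm [Hvm Hmin]]]; auto.
    { intros x Hx. exact (derivable_pt_lim_opp _ _ _ (proj1 (Hs x Hx))). }
    { intros eps He. destruct (Cv eps He) as [d [Hd Hx]]. exists d; split; auto.
      intros x Hx'. specialize (Hx x Hx'). rewrite <- Rabs_Ropp.
      replace (- (- v x - - v delta)) with (v x - v delta) by ring. exact Hx. }
    { intros eps He. destruct (Cdv eps He) as [d [Hd Hx]]. exists d; split; auto.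
      intros x Hx'. specialize (Hx x Hx'). rewrite <- Rabs_Ropp.
      replace (- (- dv x - - dv delta)) with (dv x - dv delta) by ring. exact Hx. }
    { lra. } { lra. } { lra. }
    apply (minlemma (fun x => - v x) (fun x => - dv x) m (m - delta)
             (- (2 / (h m)^2 * (exp (v m) - 1)))).
    + lra.
    + intros x Hx. exact (derivable_pt_lim_opp _ _ _ (proj1 (Hs x ltac:(lra)))).
    + exact (derivable_pt_lim_opp _ _ _ (proj2 (Hs m ltac:(lra)))).
    + pose proof (coef_pos _ (Hh m ltac:(lra))). pose proof (exp_pos' (v m) ltac:(lra)). nra.
    + exact Hmin.
Qed.
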